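(* Let $Y$ be a non-negative random variable. Let $p:[t_{1}, \infty) \to [0, \infty)$ be a non-decreasing function such that $0 < p(2t) \leq b\, p(t)$ for all $t \geq t_{1}$ and $\lim_{t \to \infty} p(t) \mathbb{P}(Y > t) = 0$, where $b > 1$ and $t_{1} > 0$ are constants. Let $h:[t_{2}, \infty) \to [0, \infty)$ be a non-decreasing function with $\lim_{t \to \infty} h(t) = \infty$ and $\lim_{t \to \infty} h(t+1)/h(t) = 1$, where $t_{2} > 0$ is a constant. Then \[ \limsup_{n \to \infty} \frac{\log (p(n) \mathbb{P}(Y > n))}{h(n)} = \limsup_{t \to \infty} \frac{\log (p(t) \mathbb{P}(Y > t))}{h(t)} \quad\text{and}\quad \liminf_{n \to \infty} \frac{\log (p(n) \mathbb{P}(Y > n))}{h(n)} = \liminf_{t \to \infty} \frac{\log (p(t) \mathbb{P}(Y > t))}{h(t)}, \] where $n$ ranges over integers and $t$ over reals.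
   Context: $\log$ is the natural logarithm with $\log 0=-\infty$. *)

(* Defs.v *)
From HB Require Import structures.
From mathcomp Require Import all_boot all_order all_algebra.
From mathcomp Require Import all_classical all_reals all_analysis.
Set Implicit Arguments. Unset Strict Implicit. Unset Printing Implicit Defensive.
Import Order.TTheory GRing.Theory Num.Theory.
Import numFieldNormedType.Exports.
Local Open Scope classical_set_scope.
Local Open Scope ring_scope.

(* The function t |-> log (p(t) P(Y > t)) / h(t), valued in \bar R,
   with log 0 = -oo (lne). *)
Definition tail_ratio (R : realType) (d : measure_display) (T : measurableType d)
  (P : probability T R) (Y : T -> R) (p h : R -> R) (t : R) : \bar R :=
  (lne ((p t)%:E * P [set x | (t < Y x)%R]) * ((h t)^-1)%:E)%E.

(* Main.v *)
Require Import Defs.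
From HB Require Import structures.
From mathcomp Require Import all_boot all_order all_algebra.
From mathcomp Require Import all_classical all_reals all_analysis.
From mathcomp Require Import ring lra.
Import Order.TTheory GRing.Theory Num.Theory.
Import numFieldNormedType.Exports.
Local Open Scope classical_set_scope.
Local Open Scope ring_scope.
Section Gen.
Variables (T : choiceType) (X : filteredType T) (R : realType).
Local Open Scope ereal_scope.

Lemma ele_dense (x L : \bar R) :
  (forall M : R, L < M%:E -> x <= M%:E) -> x <= L.
Proof.
case: L => [r| |] H.
- apply/lee_addgt0Pr => e e0; rewrite -EFinD; apply: H.
  by rewrite lte_fin ltrDl.
- by rewrite leey.
- case: x H => [r| |] H //.
  + have := H (r - 1)%R (ltNyr _); rewrite lee_fin => Hr.
    have : (r - 1 < r)%R by rewrite ltrBlDr ltrDl ltr01.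
    by rewrite ltNge Hr.
  + by have := H 0%R (ltNyr _).
Qed.

Lemma G1 (f : X -> \bar R) (F : set_system X) (L : \bar R) :
  (forall M : R, L < M%:E -> exists V, F V /\ forall x, V x -> f x <= M%:E) ->
  limf_esup f F <= L.
Proof.
move=> H; apply: ele_dense => M /H [V [FV HV]].
apply: ge_ereal_inf; exists (ereal_sup (f @` V)); first by exists V.
by apply: ge_ereal_sup => _ [x Vx <-]; exact: HV.
Qed.

Lemma G2 (f : X -> \bar R) (F : set_system X) (M : R) :
  limf_esup f F < M%:E -> exists V, F V /\ forall x, V x -> f x < M%:E.
Proof.
move=> /ereal_inf_lt [_ [V FV <-] HV]; exists V; split => // x Vx.
apply: le_lt_trans HV; apply: ereal_sup_ubound; by exists x.
Qed.
End Gen.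

Section Dir.
Variable R : realType.
Local Open Scope ereal_scope.

Lemma triv (g : R -> \bar R) :
  limn_esup (fun n => g n%:R) <= limf_esup g (pinfty_nbhs R).
Proof.
apply: G1 => M /G2 [V [[A [Ar HA]] HV]].
exists [set n : nat | (A < n%:R)%R]; split.
  exists (Num.truncn `|A|).+1 => // n /= Hn.
  apply: (le_lt_trans (ler_norm A)).
  apply: (lt_le_trans (proj2 (andP (truncn_itv (normr_ge0 A))))).
  by rewrite ler_nat.
by move=> n /HA /HV /ltW.
Qed.

Lemma keydir (g : R -> \bar R) :
  (forall M' M : R, (M' < M)%R -> (\forall n \near \oo, g n%:R < M'%:E) ->
     \forall t \near +oo%R, g t <= M%:E) ->
  limf_esup g (pinfty_nbhs R) <= limn_esup (fun n => g n%:R).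
Proof.
move=> H; apply: G1 => M HL.
have [M' [HM' HLM']] : exists M' : R, (M' < M)%R /\ limn_esup (fun n => g n%:R) < M'%:E.
  move: HL; case: (limn_esup _) => [r| |] //= HL.
  - exists ((r + M) / 2)%R; rewrite lte_fin in HL; split.
      by rewrite ltr_pdivrMr // mulrDr mulr1 ltrD2r.
    by rewrite lte_fin ltr_pdivlMr // mulrDr mulr1 ltrD2l.
  - exists (M - 1)%R; split; last exact: ltNyr.
    by rewrite ltrBlDr ltrDl ltr01.
have [V [FV HV]] := @G2 _ _ _ _ _ _ HLM'.
have := H M' M HM' (filterS HV FV).
move=> Hev; exists [set t | g t <= M%:E]; split => //.
by apply: Hev; exact: _.
Qed.
End Dir.

Theorem lemma3p2 (R : realType) (d : measure_display) (T : measurableType d)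
  (P : probability T R) (Y : T -> R) (p h : R -> R) (b t1 t2 : R)
  (mY : measurable_fun setT Y) (Y0 : forall x, 0 <= Y x)
  (b1 : 1 < b) (t1pos : 0 < t1) (t2pos : 0 < t2)
  (p_ge0 : forall t, t1 <= t -> 0 <= p t)
  (p_mono : forall s t, t1 <= s -> s <= t -> p s <= p t)
  (p_pos2 : forall t, t1 <= t -> 0 < p (2 * t))
  (p_doub : forall t, t1 <= t -> p (2 * t) <= b * p t)
  (p_tail : ((p t)%:E * P [set x | (t < Y x)%R])%E @[t --> +oo] --> 0%E)
  (h_ge0 : forall t, t2 <= t -> 0 <= h t)
  (h_mono : forall s t, t2 <= s -> s <= t -> h s <= h t)
  (h_infty : h t @[t --> +oo] --> +oo)
  (h_ratio : h (t + 1) / h t @[t --> +oo] --> (1 : R)) :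
  limn_esup (fun n : nat => tail_ratio P Y p h n%:R)
    = limf_esup (tail_ratio P Y p h) (pinfty_nbhs R)
  /\ limn_einf (fun n : nat => tail_ratio P Y p h n%:R)
    = limf_einf (tail_ratio P Y p h) (pinfty_nbhs R).
Proof.
set g := tail_ratio P Y p h.
pose q t := fine (P [set x | t < Y x]).
have mS t : measurable [set x | t < Y x].
  have := mY measurableT _ (measurable_itv `]t, +oo[).
  suff -> : [set x | t < Y x] = [set: T] `&` Y @^-1` `]t, +oo[%classic by [].
  by rewrite setTI; apply/seteqP; split => x /=; rewrite in_itv /= andbT.
have Pq t : P [set x | t < Y x] = (q t)%:E.
  by rewrite /q fineK // fin_num_measure.
have q0 t : 0 <= q t by rewrite /q fine_ge0.
have q1 t : q t <= 1.
  by rewrite -lee_fin -Pq probability_le1.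
have qmono s t : s <= t -> q t <= q s.
  move=> st; rewrite -lee_fin -!Pq; apply: le_measure; rewrite ?inE //.
  by move=> x /= /(le_lt_trans st).
have gE t : g t = (lne ((p t * q t)%:E) * ((h t)^-1)%:E)%E.
  by rewrite /g /tail_ratio Pq -EFinM.
have b0 : 0 < b by apply: lt_trans b1.
have fev : \forall t \near +oo, p t * q t < b^-1.
  have e : (fun t => (p t)%:E * P [set x | (t < Y x)%R])%E = (fun t => (p t * q t)%:E).
    by apply/funext => t; rewrite Pq.
  rewrite e in p_tail; move/fine_cvgP: p_tail => [_ Hf].
  by apply: (cvgr_lt 0 Hf); rewrite invr_gt0.
have hev : \forall t \near +oo, 1 <= h t by move/cvgryPge: h_infty; apply.
have hpos : \forall t \near +oo, 0 < h t.
  by apply: filterS hev => t; apply: lt_le_trans ltr01.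
have hinv : (h t)^-1 @[t --> +oo] --> 0.
  by apply/gtr0_cvgV0 => //.
have cc M' : ((ln b * (h s)^-1 + M') * (h (s + 1) / h s)^-1) @[s --> +oo] --> M'.
  suff H : ((ln b * (h s)^-1 + M') * (h (s + 1) / h s)^-1) @[s --> +oo] --> (ln b * 0 + M') * 1^-1.
    by rewrite mulr0 add0r invr1 mulr1 in H.
  apply: cvgM; last by apply: cvgV => //; rewrite oner_neq0.
  by apply: cvgD; [apply: cvgM => //; exact: cvg_cst | exact: cvg_cst].
have dd m' : (m' * (h (s + 1) / h s) - ln b * (h s)^-1) @[s --> +oo] --> m'.
  suff H : (m' * (h (s + 1) / h s) - ln b * (h s)^-1) @[s --> +oo] --> m' * 1 - ln b * 0.
    by rewrite mulr0 mulr1 subr0 in H.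
  apply: cvgB; first by apply: cvgM => //; exact: cvg_cst.
  by apply: cvgM => //; exact: cvg_cst.
have claimU : forall M' M : R, M' < M ->
    (\forall n \near \oo, (g n%:R < M'%:E)%E) -> \forall t \near +oo, (g t <= M%:E)%E.
  move=> M' M MM' [N _ HN].
  have E : \forall s \near +oo, [/\ t1 <= s /\ 1 <= s, t2 <= s, 0 < h s,
      p s * q s < b^-1 & (ln b * (h s)^-1 + M') * (h (s + 1) / h s)^-1 < M].
    near=> s; split.
    - by split; near: s; apply: nbhs_pinfty_ge; rewrite num_real.
    - by near: s; apply: nbhs_pinfty_ge; rewrite num_real.
    - by near: s; exact: hpos.
    - by near: s; exact: fev.
    - by near: s; exact: (cvgr_lt _ (cc M')).
  case: E => A [Ar HA].
  exists (Num.max (A + 1) N%:R); split; first by rewrite num_real.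
  move=> t; rewrite gt_max => /andP[HtA HtN].
  have t0 : 0 <= t by apply: le_trans (ltW HtN).
  have /andP[nt tn] := truncn_itv t0; set n := Num.truncn t in nt tn.
  rewrite -natr1 in tn.
  have HAt : A < t by apply: lt_trans HtA; rewrite ltrDl ltr01.
  have [[t1t _] t2t ht _ _] := HA t HAt.
  have HAn : A < n%:R by have := lt_trans HtA tn; rewrite ltrD2r.
  have [[t1n n1] t2n hn fn cn] := HA _ HAn.
  have Nn : (N <= n)%N.
    by rewrite -ltnS -(ltr_nat R) -natr1; apply: lt_trans HtN tn.
  have an := HN n Nn; rewrite /= gE in an.
  have pn1 : p (n%:R + 1) <= b * p n%:R.
    apply: le_trans (p_doub _ t1n); apply: p_mono; lra.
  have fle : p t * q t <= b * (p n%:R * q n%:R).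
    rewrite mulrA; apply: ler_pM; [exact: p_ge0 | exact: q0 | | exact: qmono].
    apply: le_trans pn1; apply: p_mono => //; exact: ltW tn.
  rewrite gE; case: (leP (p t * q t) 0) => ft.
    by rewrite le0_lneNy ?lee_fin // gt0_mulNye ?lte_fin ?invr_gt0 // leNye.
  have fnp : 0 < p n%:R * q n%:R.
    by rewrite -(pmulr_rgt0 _ b0); exact: lt_le_trans ft fle.
  rewrite lne_EFin // -EFinM lte_fin ltr_pdivrMr // in an.
  rewrite lne_EFin // -EFinM lee_fin.
  have lnle : ln (p t * q t) <= ln b + ln (p n%:R * q n%:R).
    rewrite -lnM ?posrE // ler_ln ?posrE //; exact: mulr_gt0.
  have x0 : ln b + ln (p n%:R * q n%:R) <= 0.
    rewrite -lnM ?posrE //; apply: ln_le0; apply: ltW.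
    by have := fn; rewrite -(ltr_pM2l b0) mulfV ?gt_eqF.
  have htn : h t <= h (n%:R + 1) by apply: h_mono t2t (ltW tn).
  have hn1 : 0 < h (n%:R + 1) by apply: lt_le_trans htn.
  apply: le_trans (ltW cn).
  apply: (@le_trans _ _ ((ln b + ln (p n%:R * q n%:R)) / h t)).
    by apply: ler_wpM2r => //; rewrite invr_ge0 ltW.
  apply: (@le_trans _ _ ((ln b + ln (p n%:R * q n%:R)) / h (n%:R + 1))).
    by apply: (ler_wnM2l x0); rewrite lef_pV2 ?posrE.
  have -> : (ln b / h n%:R + M') / (h (n%:R + 1) / h n%:R) = (ln b + M' * h n%:R) / h (n%:R + 1).
    by field; rewrite ?gt_eqF.
  apply: ler_wpM2r; first by rewrite invr_ge0 ltW.
  by rewrite lerD2l ltW.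
have claimD : forall M' M : R, M' < M ->
    (\forall n \near \oo, ((\- g) n%:R < M'%:E)%E) -> \forall t \near +oo, ((\- g) t <= M%:E)%E.
  move=> M' M MM' [N _ HN].
  have E : \forall s \near +oo, [/\ t1 <= s /\ 1 <= s, t2 <= s, 0 < h s,
      p s * q s < b^-1 & - M < - M' * (h (s + 1) / h s) - ln b * (h s)^-1].
    near=> s; split.
    - by split; near: s; apply: nbhs_pinfty_ge; rewrite num_real.
    - by near: s; apply: nbhs_pinfty_ge; rewrite num_real.
    - by near: s; exact: hpos.
    - by near: s; exact: fev.
    - by near: s; apply: (cvgr_gt _ (dd (- M'))); rewrite ltrN2.
  case: E => A [Ar HA].
  exists (Num.max (A + 1) N%:R); split; first by rewrite num_real.
  move=> t; rewrite gt_max => /andP[HtA HtN].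
  have t0 : 0 <= t by apply: le_trans (ltW HtN).
  have /andP[nt tn] := truncn_itv t0; set n := Num.truncn t in nt tn.
  rewrite -natr1 in tn.
  have HAt : A < t by apply: lt_trans HtA; rewrite ltrDl ltr01.
  have [[t1t _] t2t ht ft1 _] := HA t HAt.
  have HAn : A < n%:R by have := lt_trans HtA tn; rewrite ltrD2r.
  have [[t1n n1] t2n hn fn dn] := HA _ HAn.
  have Nn : (N <= n.+1)%N.
    by apply: leqW; rewrite -ltnS -(ltr_nat R) -natr1; apply: lt_trans HtN tn.
  have an := HN n.+1 Nn; rewrite /= lteNl -natr1 gE in an.
  have pn1 : p (n%:R + 1) <= b * p n%:R.
    apply: le_trans (p_doub _ t1n); apply: p_mono; lra.
  have htn : h t <= h (n%:R + 1) by apply: h_mono t2t (ltW tn).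
  have hn1 : 0 < h (n%:R + 1) by apply: lt_le_trans htn.
  case: (leP (p (n%:R + 1) * q (n%:R + 1)) 0) => fn1.
    by move: an; rewrite le0_lneNy ?lee_fin // gt0_mulNye ?lte_fin ?invr_gt0.
  rewrite lne_EFin // -EFinM lte_fin ltr_pdivlMr // in an.
  have fle : p (n%:R + 1) * q (n%:R + 1) <= b * (p t * q t).
    rewrite mulrA; apply: ler_pM; [apply: p_ge0; lra | exact: q0 | | exact: qmono (ltW tn)].
    apply: le_trans pn1 _; apply: (ler_wpM2l (ltW b0)); exact: p_mono t1n nt.
  have ftp : 0 < p t * q t.
    by rewrite -(pmulr_rgt0 _ b0); exact: lt_le_trans fn1 fle.
  rewrite /= gE lne_EFin // -EFinM -EFinN lee_fin lerNl.
  have lnle : ln (p (n%:R + 1) * q (n%:R + 1)) <= ln b + ln (p t * q t).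
    rewrite -lnM ?posrE // ler_ln ?posrE //; exact: mulr_gt0.
  have x0 : ln (p t * q t) <= 0.
    apply: ln_le0; apply: ltW; apply: lt_trans ft1 _; by rewrite invf_lt1.
  apply: le_trans (ltW dn) _.
  have -> : - M' * (h (n%:R + 1) / h n%:R) - ln b * (h n%:R)^-1
      = (- M' * h (n%:R + 1) - ln b) / h n%:R.
    by field; rewrite ?gt_eqF.
  apply: (@le_trans _ _ ((ln (p (n%:R + 1) * q (n%:R + 1)) - ln b) / h n%:R)).
    by apply: ler_wpM2r; [rewrite invr_ge0 ltW | rewrite lerD2r ltW].
  apply: (@le_trans _ _ (ln (p t * q t) / h n%:R)).
    by apply: ler_wpM2r; [rewrite invr_ge0 ltW | lra].
  apply: (ler_wnM2l x0); rewrite lef_pV2 ?posrE //; exact: h_mono t2n nt.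
split.
  apply/le_anti/andP; split; first exact: triv.
  by apply: keydir; exact: claimU.
rewrite /limn_einf /limf_einf; congr (- _)%E.
apply/le_anti/andP; split.
  have H := @triv R (\- g)%E; exact H.
have H := @keydir R _ claimD; exact H.
Unshelve. all: by end_near.
Qed.
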